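(* Let $\mathcal{X}=\mathcal{Y}=\mathcal{A}=\mathcal{B}=\{0,1\}$ and $\epsilon\in[0,1)$. Then the inequality $$(1-\epsilon)\,p(00|00)+\epsilon(1-\epsilon)\,p(11|00)-p(01|01)-p(10|10)-p(00|11)\le\epsilon(1-\epsilon)$$ is valid for every $p\in\mathcal{P}_2^{AB,(\epsilon,\epsilon)}$ and defines a facet of this polytope, i.e. the set of points of $\mathcal{P}_2^{AB,(\epsilon,\epsilon)}$ attaining equality has affine dimension $\dim\mathcal{P}_2^{AB,(\epsilon,\epsilon)}-1$ (for $\epsilon\in(0,1)$ the polytope has dimension $12$).
   Context: Here $p(ab|xy)$ denotes the probability of outputs $(a,b)$ given inputs $(x,y)$. $\mathcal{P}_2^{AB,(\epsilon,\epsilon)}\subset\mathbb{R}^{16}$ is the set of all conditional distributions $p$ for which there exist a probability space $(\Lambda,q)$ and distributions $p_A(\cdot|x,y,\lambda)$ on $\{0,1\}$, $p_B(\cdot|x,y,\lambda)$ on $\{0,1\}$ with $p(ab|xy)=\int q(d\lambda)p_A(a|xy\lambda)p_B(b|xy\lambda)$ for all $a,b,x,y$, $\frac12\sum_a|p_A(a|xy\lambda)-p_A(a|xy'\lambda)|\le\epsilon$ for all $x,y,y',\lambda$, and $\frac12\sum_b|p_B(b|xy\lambda)-p_B(b|x'y\lambda)|\le\epsilon$ for all $y,x,x',\lambda$. It is a convex polytope. *)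

(* Defs.v *)
From HB Require Import structures.
From mathcomp Require Import all_boot all_order all_algebra.
From mathcomp Require Import all_classical all_reals all_analysis.
Set Implicit Arguments. Unset Strict Implicit. Unset Printing Implicit Defensive.
Import Order.TTheory GRing.Theory Num.Theory.
Local Open Scope ring_scope.

(* A behaviour p(ab|xy), written p a b x y, with a,b,x,y in {0,1} = bool
   (false = 0, true = 1).  Points of R^16. *)
Definition behav (R : realType) := bool -> bool -> bool -> bool -> R.

Definition in_P (R : realType) (eps : R) (p : behav R) : Prop :=
  exists (d : measure_display) (T : measurableType d) (q : probability T R)
         (pA pB : bool -> bool -> bool -> T -> R),
    (forall a x y, measurable_fun setT (pA a x y)) /\
    (forall b x y, measurable_fun setT (pB b x y)) /\
    [/\
        (forall x y l, (0 <= pA false x y l /\ 0 <= pA true x y l /\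
                           pA false x y l + pA true x y l = 1 /\
                           0 <= pB false x y l /\ 0 <= pB true x y l /\
                           pB false x y l + pB true x y l = 1)),
        (forall x y y' l, 2^-1 * (`|pA false x y l - pA false x y' l|
                               + `|pA true x y l - pA true x y' l|) <= eps),
        (forall y x x' l, 2^-1 * (`|pB false x y l - pB false x' y l|
                               + `|pB true x y l - pB true x' y l|) <= eps) &
        (forall a b x y, ((p a b x y)%:E =
            \int[q]_l ((pA a x y l * pB b x y l)%:E))%E)].

Definition aff_indep (R : realType) (k : nat) (q : 'I_k.+1 -> behav R) : Prop :=
  forall c : 'I_k.+1 -> R,
    \sum_(i < k.+1) c i = 0 ->
    (forall a b x y, \sum_(i < k.+1) c i * q i a b x y = 0) ->
    forall i, c i = 0.

Definition affdim (R : realType) (S : behav R -> Prop) (n : nat) : Prop :=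
  (exists q : 'I_n.+1 -> behav R, (forall i, S (q i)) /\ aff_indep q) /\
  (forall q : 'I_n.+2 -> behav R, (forall i, S (q i)) -> ~ aff_indep q).

Definition ineq_lhs (R : realType) (eps : R) (p : behav R) : R :=
  (1 - eps) * p false false false false
  + eps * (1 - eps) * p true true false false
  - p false true false true
  - p true false true false
  - p false false true true.

(* Main.v *)
Require Import Defs.
From HB Require Import structures.
From mathcomp Require Import all_boot all_order all_algebra.
From mathcomp Require Import all_classical all_reals all_analysis.
From mathcomp Require Import measurable_realfun.
From mathcomp Require Import ring lra.
Import Order.TTheory GRing.Theory Num.Theory.
Set Implicit Arguments. Unset Strict Implicit. Unset Printing Implicit Defensive.
Local Open Scope ring_scope.

Section Int.
Context (R : realType) d (T : measurableType d) (q : probability T R).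

Definition Iint (f : T -> R) := q.-integrable setT (EFin \o f).

Lemma bint (f : T -> R) (M : R) : measurable_fun setT f ->
  (forall l, `|f l| <= M) -> Iint f.
Proof.
move=> mf fM; apply: (le_integrable measurableT (g := EFin \o cst M)).
- exact/measurable_EFinP.
- move=> l _ /=; rewrite lee_fin; apply: (le_trans (fM l)).
  exact: ler_norm.
- exact: finite_measure_integrable_cst.
Qed.

Lemma intL_int (f g : T -> R) (a b : R) : Iint f -> Iint g ->
  Iint (fun l => a * f l + b * g l).
Proof.
move=> hf hg; rewrite /Iint.
have -> : EFin \o (fun l => a * f l + b * g l) =
   (fun l => a%:E * (EFin \o f) l)%E \+ (fun l => b%:E * (EFin \o g) l)%E.
  by apply: funext => l /=; rewrite EFinD !EFinM.
by apply: integrableD => //; apply: integrableZl.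
Qed.

Lemma intL (f g : T -> R) (a b : R) : Iint f -> Iint g ->
  (\int[q]_l ((a * f l + b * g l)%:E) =
   a%:E * \int[q]_l ((f l)%:E) + b%:E * \int[q]_l ((g l)%:E))%E.
Proof.
move=> hf hg.
under eq_integral do rewrite EFinD !EFinM.
rewrite integralD //.
- by rewrite integralZl // integralZl.
- exact: integrableZl.
- exact: integrableZl.
Qed.

Lemma int5 (f1 f2 f3 f4 f5 : T -> R) (p1 p2 p3 p4 p5 a1 a2 a3 a4 a5 b : R) :
  Iint f1 -> Iint f2 -> Iint f3 -> Iint f4 -> Iint f5 ->
  (p1%:E = \int[q]_l ((f1 l)%:E))%E ->
  (p2%:E = \int[q]_l ((f2 l)%:E))%E ->
  (p3%:E = \int[q]_l ((f3 l)%:E))%E ->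
  (p4%:E = \int[q]_l ((f4 l)%:E))%E ->
  (p5%:E = \int[q]_l ((f5 l)%:E))%E ->
  (forall l, a1 * f1 l + a2 * f2 l + a3 * f3 l + a4 * f4 l + a5 * f5 l <= b) ->
  a1 * p1 + a2 * p2 + a3 * p3 + a4 * p4 + a5 * p5 <= b.
Proof.
move=> i1 i2 i3 i4 i5 e1 e2 e3 e4 e5 H.
pose g := fun l => a1 * f1 l + 1 * (a2 * f2 l + 1 * (a3 * f3 l + 1 * (a4 * f4 l + a5 * f5 l))).
have ig : Iint g by do 3 (apply: intL_int => //); apply: intL_int.
have E : ((a1 * p1 + a2 * p2 + a3 * p3 + a4 * p4 + a5 * p5)%:E = \int[q]_l ((g l)%:E))%E.
  rewrite /g intL //; last by do 2 (apply: intL_int => //); apply: intL_int.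
  rewrite intL //; last by apply: intL_int => //; apply: intL_int.
  rewrite intL //; last by apply: intL_int.
  rewrite intL // -e1 -e2 -e3 -e4 -e5 -!EFinM -!EFinD.
  congr EFin; ring.
rewrite -lee_fin E.
have -> : (b%:E = \int[q]_l (cst b%:E l))%E.
  rewrite integral_cst // -[LHS]mule1; congr (_ * _)%E; exact/esym/probability_setT.
apply: (le_integral measurableT) => //.
- exact: finite_measure_integrable_cst.
- move=> l _; rewrite lee_fin /g /=; move: (H l); lra.
Qed.

End Int.

Definition resp_ok (R : realType) (e : R) (A B : bool -> bool -> bool -> R) :=
  [/\ (forall x y, (0 <= A false x y /\ 0 <= A true x y /\
                           A false x y + A true x y = 1 /\
                           0 <= B false x y /\ 0 <= B true x y /\
                           B false x y + B true x y = 1)),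
        (forall x y y', 2^-1 * (`|A false x y - A false x y'|
                               + `|A true x y - A true x y'|) <= e) &
        (forall y x x', 2^-1 * (`|B false x y - B false x' y|
                               + `|B true x y - B true x' y|) <= e)].

Definition ev (R : realType) (p : behav R) (k : bool * bool * bool * bool) :=
  let '(a, b, x, y) := k in p a b x y.
Definition evAB (R : realType) (A B : bool -> bool -> bool -> R) (k : bool * bool * bool * bool) :=
  let '(a, b, x, y) := k in A a x y * B b x y.

Lemma in_P_rel (R : realType) (e : R) (p : behav R) (k1 k2 k3 k4 k5 : bool * bool * bool * bool)
  (a1 a2 a3 a4 a5 b : R) : in_P e p ->
  (forall A B, resp_ok e A B ->
     a1 * evAB A B k1 + a2 * evAB A B k2 + a3 * evAB A B k3 + a4 * evAB A B k4
     + a5 * evAB A B k5 <= b) ->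
  a1 * ev p k1 + a2 * ev p k2 + a3 * ev p k3 + a4 * ev p k4 + a5 * ev p k5 <= b.
Proof.
move=> [dd [T [q [pA [pB [mA [mB [h1 h2 h3 h4]]]]]]]] H.
pose F k l := evAB (fun a x y => pA a x y l) (fun b x y => pB b x y l) k.
have iF : forall k, Iint q (F k).
  move=> [[[a bb] x] y]; apply: (@bint _ _ _ q _ 1).
    by rewrite /F /evAB; apply: measurable_funM.
  move=> l; rewrite /F /evAB normrM.
  have [A0 [A1 [A01 [B0 [B1 B01]]]]] := h1 x y l.
  have aA : `|pA a x y l| <= 1.
    by case: a; rewrite ger0_norm //; lra.
  have bB : `|pB bb x y l| <= 1.
    by case: bb; rewrite ger0_norm //; lra.
  by rewrite -[1](mulr1 1); apply: ler_pM.
have eF : forall k, ((ev p k)%:E = \int[q]_l ((F k l)%:E))%E.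
  by move=> [[[a bb] x] y]; rewrite /F /evAB /ev h4.
apply: (int5 (iF k1) (iF k2) (iF k3) (iF k4) (iF k5) (eF k1) (eF k2) (eF k3) (eF k4) (eF k5)).
move=> l; apply: H; split.
- exact: (fun x y => h1 x y l).
- exact: (fun x y y' => h2 x y y' l).
- exact: (fun y x x' => h3 y x x' l).
Qed.

Lemma core (R : realFieldType) (e x y u v : R) :
  0 <= e -> e < 1 -> 0 <= x -> x <= 1 - e -> 0 <= y -> y <= 1 - e ->
  0 <= u -> u <= 1 - e -> 0 <= v -> v <= 1 - e ->
  (1 - e) * ((1 + e) * x * y + e^+2 * (x + y) - e^+2 * (1-e))
   <= x * (1 - e - v) + y * (1 - e - u) + u * v.
Proof.
move=> e0 e1 x0 x1 y0 y1 u0 u1 v0 v1.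
have c0 : 0 <= 1 - e by lra.
have G1 : 0 <= (1 - e - x) * ((1 + e) * y + e^+2) by apply: mulr_ge0; nra.
have G2 : 0 <= (1 - e - y) * ((1 + e) * x + e^+2) by apply: mulr_ge0; nra.
have H1 : 0 <= (1 - e) * (1 - e - x) * y by apply: mulr_ge0 => //; apply: mulr_ge0; lra.
have H2 : 0 <= (1 - e) * (1 - e - y) * x by apply: mulr_ge0 => //; apply: mulr_ge0; lra.
have E1 : 0 <= e^+2 * (1 - e - y) by apply: mulr_ge0; nra.
have E2 : 0 <= e^+2 * (1 - e - x) by apply: mulr_ge0; nra.
have [ux|ux] := lerP x u; have [vy|vy] := lerP y v.
- have : 0 <= (u - x) * (v - y) by apply: mulr_ge0; lra.
  nra.
- have : 0 <= (u - x) * (1 - e - v) by apply: mulr_ge0; lra.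
  have : 0 <= (u - x) * (y - v) by apply: mulr_ge0; lra.
  nra.
- have : 0 <= (x - u) * (1 - e - v) by apply: mulr_ge0; lra.
  have : 0 <= (x - u) * (v - y) by apply: mulr_ge0; lra.
  nra.
- have : 0 <= (x - u) * (y - v) by apply: mulr_ge0; lra.
  nra.
Qed.
Lemma pointwise (R : realFieldType) (e s a01 a10 a11 t b10 b01 b11 : R) :
  0 <= e -> e < 1 ->
  0 <= s <= 1 -> 0 <= a01 <= 1 -> 0 <= a10 <= 1 -> 0 <= a11 <= 1 ->
  0 <= t <= 1 -> 0 <= b10 <= 1 -> 0 <= b01 <= 1 -> 0 <= b11 <= 1 ->
  `|s - a01| <= e -> `|a10 - a11| <= e -> `|t - b10| <= e -> `|b01 - b11| <= e ->
  (1 - e) * (s * t) + e * (1 - e) * ((1 - s) * (1 - t))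
   - a01 * (1 - b01) - (1 - a10) * b10 - a11 * b11 <= e * (1 - e).
Proof.
move=> e0 e1 /andP[s0 s1] /andP[a010 a011] /andP[a100 a101] /andP[a110 a111]
  /andP[t0 t1] /andP[b100 b101] /andP[b010 b011] /andP[b110 b111].
move=> /ler_normlP[h1 h1'] /ler_normlP[h2 h2'] /ler_normlP[h3 h3'] /ler_normlP[h4 h4'].
have T2 : 0 <= a01 * (1 - b01) by apply: mulr_ge0; lra.
have T3 : 0 <= (1 - a10) * b10 by apply: mulr_ge0; lra.
have T4 : 0 <= a11 * b11 by apply: mulr_ge0; lra.
have [se|es] := lerP s e.
  have : s * t <= e * t by apply: ler_wpM2r.
  have : 0 <= e * (s * (1 - t)) by apply: mulr_ge0 => //; apply: mulr_ge0; lra.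
  move=> H1 H2.
  have : (1 - e) * ((1 + e) * (s * t)) <= (1 - e) * (e * (s + t)) by apply: ler_wpM2l; lra.
  nra.
have [te|et] := lerP t e.
  have : s * t <= s * e by apply: ler_wpM2l.
  have : 0 <= e * (t * (1 - s)) by apply: mulr_ge0 => //; apply: mulr_ge0; lra.
  move=> H1 H2.
  have : (1 - e) * ((1 + e) * (s * t)) <= (1 - e) * (e * (s + t)) by apply: ler_wpM2l; lra.
  nra.
pose c := 1 - e. pose x := s - e. pose y := t - e.
pose u := Num.min a11 c. pose v := Num.min b11 c.
have u0 : 0 <= u by rewrite /u le_min a110 /c subr_ge0 ltW.
have v0 : 0 <= v by rewrite /v le_min b110 /c subr_ge0 ltW.
have uc : u <= c by rewrite /u ge_min lexx orbT.
have vc : v <= c by rewrite /v ge_min lexx orbT.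
have ua : u <= a11 by rewrite /u ge_min lexx.
have vb : v <= b11 by rewrite /v ge_min lexx.
have x0 : 0 <= x by rewrite /x; lra.
have x1 : x <= 1 - e by rewrite /x; lra.
have y0 : 0 <= y by rewrite /y; lra.
have y1 : y <= 1 - e by rewrite /y; lra.
have K := @core _ _ _ _ _ _ e0 e1 x0 x1 y0 y1 u0 uc v0 vc.
have K2 : x * (1 - e - v) <= a01 * (1 - b01).
  have [bc|cb] := lerP b11 c.
    have -> : v = b11 by rewrite /v min_l.
    apply: ler_pM; rewrite /x /c in bc *; lra.
  have -> : v = c by rewrite /v min_r // ltW.
  by rewrite /c subrr mulr0.
have K3 : y * (1 - e - u) <= (1 - a10) * b10.
  have [bc|cb] := lerP a11 c.
    have -> : u = a11 by rewrite /u min_l.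
    rewrite mulrC; apply: ler_pM; rewrite /y /c in bc *; lra.
  have -> : u = c by rewrite /u min_r // ltW.
  by rewrite /c subrr mulr0.
have K4 : u * v <= a11 * b11 by apply: ler_pM.
have Id : (1 - e) * (s * t) + e * (1 - e) * ((1 - s) * (1 - t)) - e * (1 - e) =
  (1 - e) * ((1 + e) * x * y + e^+2 * (x + y) - e^+2 * (1-e)) by rewrite /x /y; ring.
rewrite -subr_le0; move: Id K K2 K3 K4.
set L := (1 - e) * ((1 + e) * x * y + e^+2 * (x + y) - e^+2 * (1-e)).
set M1 := x * (1 - e - v). set M2 := y * (1 - e - u). set M3 := u * v.
set N1 := a01 * (1 - b01). set N2 := (1 - a10) * b10. set N3 := a11 * b11.
set F := (1 - e) * (s * t) + e * (1 - e) * ((1 - s) * (1 - t)).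
set G := e * (1 - e). move=> *.
have -> : F - N1 - N2 - N3 - G = (F - G) - (N1 + N2 + N3) by ring.
lra.
Qed.


Lemma le_of_eq (R : realType) (a b : R) : a = b -> a <= b.
Proof. by move=> ->. Qed.

Lemma resp_bnd (R : realType) (e : R) A B : resp_ok e A B ->
  (forall x y, 0 <= A false x y <= 1) /\ (forall x y, A true x y = 1 - A false x y) /\
      (forall x y, 0 <= B false x y <= 1) /\ (forall x y, B true x y = 1 - B false x y) /\
      (forall x, `|A false x false - A false x true| <= e) /\
      (forall y, `|B false false y - B false true y| <= e).
Proof.
move=> [h1 h2 h3].
have hA : forall x y, A true x y = 1 - A false x y.
  by move=> x y; have [_ [_ [h _]]] := h1 x y; lra.
have hB : forall x y, B true x y = 1 - B false x y.
  by move=> x y; have [_ [_ [_ [_ [_ h]]]]] := h1 x y; lra.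
split; [|split; [exact: hA|split; [|split; [exact: hB|split]]]].
- move=> x y; have [a0 [a1 [h _]]] := h1 x y.
  by rewrite a0 /=; lra.
- move=> x y; have [_ [_ [_ [a0 [a1 h]]]]] := h1 x y.
  by rewrite a0 /=; lra.
- move=> x; have := h2 x false true; rewrite !hA.
  have -> : 1 - A false x false - (1 - A false x true) = - (A false x false - A false x true) by ring.
  rewrite normrN; lra.
- move=> y; have := h3 y false true; rewrite !hB.
  have -> : 1 - B false false y - (1 - B false true y) = - (B false false y - B false true y) by ring.
  rewrite normrN; lra.
Qed.

Lemma valid (R : realType) (e : R) (p : behav R) : 0 <= e -> e < 1 -> in_P e p ->
  ineq_lhs e p <= e * (1 - e).
Proof.
move=> e0 e1 hp.
have := @in_P_rel R e p (false,false,false,false) (true,true,false,false)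
  (false,true,false,true) (true,false,true,false) (false,false,true,true)
  (1 - e) (e * (1 - e)) (-1) (-1) (-1) (e * (1 - e)) hp.
rewrite /ineq_lhs /=.
have -> : forall a b c d f : R, (1 - e) * a + e * (1 - e) * b + -1 * c + -1 * d + -1 * f
   = (1 - e) * a + e * (1 - e) * b - c - d - f by move=> *; ring.
apply=> A B hAB.
have [hA1 [hA2 [hB1 [hB2 [hA3 hB3]]]]] := resp_bnd hAB.
rewrite /evAB !hA2 !hB2.
have := @pointwise R e (A false false false) (A false false true) (A false true false) (A false true true)
  (B false false false) (B false true false) (B false false true) (B false true true) e0 e1
  (hA1 _ _) (hA1 _ _) (hA1 _ _) (hA1 _ _) (hB1 _ _) (hB1 _ _) (hB1 _ _) (hB1 _ _)
  (hA3 false) _ (hB3 false) _.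
move=> /(_ (hA3 true) (hB3 true)) H.
apply: le_trans H; rewrite le_eqVlt; apply/orP; left; apply/eqP; ring.
Qed.

Lemma norm1 (R : realType) (e : R) (p : behav R) x y : in_P e p ->
  p false false x y + p false true x y + p true false x y + p true true x y = 1.
Proof.
move=> hp; apply/eqP; rewrite eq_le; apply/andP; split.
- have := @in_P_rel R e p (false,false,x,y) (false,true,x,y) (true,false,x,y) (true,true,x,y)
    (true,true,x,y) 1 1 1 1 0 1 hp.
  rewrite /= !mul1r mul0r addr0; apply=> A B hAB.
  have [hA1 [hA2 [hB1 [hB2 _]]]] := resp_bnd hAB.
  rewrite /evAB !hA2 !hB2; apply: le_of_eq; ring.
- have := @in_P_rel R e p (false,false,x,y) (false,true,x,y) (true,false,x,y) (true,true,x,y)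
    (true,true,x,y) (-1) (-1) (-1) (-1) 0 (-1) hp.
  rewrite /= mul0r addr0 => H.
  have : - (p false false x y + p false true x y + p true false x y + p true true x y) <= -1.
    apply: le_trans (H _); first by apply: le_of_eq; ring.
    move=> A B hAB.
    have [hA1 [hA2 [hB1 [hB2 _]]]] := resp_bnd hAB.
    rewrite /evAB !hA2 !hB2; apply: le_of_eq; ring.
  by rewrite lerN2.
Qed.

Lemma in_P_releq (R : realType) (e : R) (p : behav R) (k1 k2 k3 k4 k5 : bool * bool * bool * bool)
  (a1 a2 a3 a4 a5 b : R) : in_P e p ->
  (forall A B, resp_ok e A B ->
     a1 * evAB A B k1 + a2 * evAB A B k2 + a3 * evAB A B k3 + a4 * evAB A B k4
     + a5 * evAB A B k5 = b) ->
  a1 * ev p k1 + a2 * ev p k2 + a3 * ev p k3 + a4 * ev p k4 + a5 * ev p k5 = b.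
Proof.
move=> hp H; apply/eqP; rewrite eq_le; apply/andP; split.
  by apply: (in_P_rel hp) => A B hAB; rewrite H.
have := @in_P_rel R e p k1 k2 k3 k4 k5 (-a1) (-a2) (-a3) (-a4) (-a5) (-b) hp.
have E : forall u1 u2 u3 u4 u5 : R, -a1 * u1 + -a2 * u2 + -a3 * u3 + -a4 * u4 + -a5 * u5
   = - (a1 * u1 + a2 * u2 + a3 * u3 + a4 * u4 + a5 * u5) by move=> *; ring.
rewrite E lerN2; apply=> A B hAB; rewrite E H //.
Qed.

Lemma margA (R : realType) (p : behav R) x : in_P 0 p ->
  p false false x false + p false true x false = p false false x true + p false true x true.
Proof.
move=> hp; apply/eqP; rewrite -subr_eq0; apply/eqP.
have := @in_P_releq R 0 p (false,false,x,false) (false,true,x,false) (false,false,x,true)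
  (false,true,x,true) (false,true,x,true) 1 1 (-1) (-1) 0 0 hp.
rewrite /= => H; rewrite -[RHS]H; first ring.
move=> A B hAB.
have [hA1 [hA2 [hB1 [hB2 [hA3 _]]]]] := resp_bnd hAB.
have E : A false x false = A false x true.
  by apply/eqP; rewrite -subr_eq0 -normr_le0 hA3.
rewrite /evAB ?hA2 ?hB2 E; ring.
Qed.

Lemma margB (R : realType) (p : behav R) y : in_P 0 p ->
  p false false false y + p true false false y = p false false true y + p true false true y.
Proof.
move=> hp; apply/eqP; rewrite -subr_eq0; apply/eqP.
have := @in_P_releq R 0 p (false,false,false,y) (true,false,false,y) (false,false,true,y)
  (true,false,true,y) (true,false,true,y) 1 1 (-1) (-1) 0 0 hp.
rewrite /= => H; rewrite -[RHS]H; first ring.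
move=> A B hAB.
have [hA1 [hA2 [hB1 [hB2 [_ hB3]]]]] := resp_bnd hAB.
have E : B false false y = B false true y.
  by apply/eqP; rewrite -subr_eq0 -normr_le0 hB3.
rewrite /evAB ?hA2 ?hB2 E; ring.
Qed.

Definition mkpt (R : realType) (A B : bool -> bool -> R) : behav R :=
  fun a b x y => (if a then 1 - A x y else A x y) * (if b then 1 - B x y else B x y).

Definition dd (R : realType) : probability R R := \d_(0%R : R).

Lemma intc (R : realType) (c : R) : (\int[(dd R)]_l (c%:E) = c%:E)%E.
Proof.
have := @integral_cst _ R R (dd R) setT measurableT c%:E.
rewrite /cst => ->; rewrite -[RHS]mule1; congr (_ * _)%E.
exact: (probability_setT (dd R)).
Qed.

Lemma in_P_mkpt (R : realType) (e : R) (A B : bool -> bool -> R) :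
  (forall x y, 0 <= A x y <= 1) -> (forall x y, 0 <= B x y <= 1) ->
  (forall x, `|A x false - A x true| <= e) -> (forall y, `|B false y - B true y| <= e) ->
  in_P e (mkpt A B).
Proof.
move=> hA hB hA' hB'.
have e0 : 0 <= e by apply: le_trans (hA' false).
exists _, R, (dd R).
exists (fun a x y (_ : R) => if a then 1 - A x y else A x y).
exists (fun b x y (_ : R) => if b then 1 - B x y else B x y).
split; first by move=> *; exact: measurable_cst.
split; first by move=> *; exact: measurable_cst.
split.
- move=> x y _; have /andP[a0 a1] := hA x y; have /andP[b0 b1] := hB x y.
  do 5 (split; first lra); lra.
- move=> x y y' _ /=.
  have -> : 1 - A x y - (1 - A x y') = - (A x y - A x y') by ring.
  rewrite normrN.
  have -> : 2^-1 * (`|A x y - A x y'| + `|A x y - A x y'|) = `|A x y - A x y'|.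
    by field.
  by case: y; case: y'; rewrite ?subrr ?normr0 // distrC.
- move=> y x x' _ /=.
  have -> : 1 - B x y - (1 - B x' y) = - (B x y - B x' y) by ring.
  rewrite normrN.
  have -> : 2^-1 * (`|B x y - B x' y| + `|B x y - B x' y|) = `|B x y - B x' y|.
    by field.
  by case: x; case: x'; rewrite ?subrr ?normr0 // distrC.
- by move=> a b x y; rewrite intc.
Qed.

Lemma ker_exists (R : fieldType) m n (A : 'M[R]_(m, n)) : (n < m)%N ->
  exists c : 'I_m -> R, (exists i, c i != 0) /\ forall k, \sum_i c i * A i k = 0.
Proof.
move=> nm.
have K0 : kermx A != 0.
  rewrite -mxrank_eq0 mxrank_ker subn_eq0 -ltnNge.
  exact: leq_ltn_trans (rank_leq_col A) nm.
have [/existsP[i /existsP[j Hij]] | H] := boolP [exists i, exists j, kermx A i j != 0].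
  exists (fun k => kermx A i k); split; first by exists j.
  move=> k; have := congr1 (fun M : 'M[R]_(m, n) => M i k) (mulmx_ker A).
  by rewrite !mxE.
exfalso; move/eqP: K0; apply; apply/matrixP => i j; rewrite [RHS]mxE.
move: H; rewrite negb_exists => /forallP/(_ i).
by rewrite negb_exists => /forallP/(_ j); rewrite negbK => /eqP.
Qed.

Lemma no_indep (R : realType) (n : nat) (S : behav R -> Prop)
  (sel : 'I_n -> bool * bool * bool * bool) :
  (forall q : 'I_n.+2 -> behav R, (forall i, S (q i)) -> forall c : 'I_n.+2 -> R,
     \sum_i c i = 0 -> (forall j, \sum_i c i * ev (q i) (sel j) = 0) ->
     forall a b x y, \sum_i c i * q i a b x y = 0) ->
  forall q : 'I_n.+2 -> behav R, (forall i, S (q i)) -> ~ aff_indep q.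
Proof.
move=> H q hq hind.
pose A : 'M[R]_(n.+2, 1 + n) := row_mx (const_mx 1) (\matrix_(i, j) ev (q i) (sel j)).
have [c [[i ci] hc]] := @ker_exists R n.+2 (1 + n) A (leqnn _).
have hs : \sum_i c i = 0.
  rewrite -[RHS](hc (lshift n ord0)); apply: eq_bigr => k _.
  by rewrite /A row_mxEl mxE mulr1.
have hj : forall j, \sum_i c i * ev (q i) (sel j) = 0.
  move=> j; rewrite -[RHS](hc (rshift 1 j)); apply: eq_bigr => k _.
  by rewrite /A row_mxEr mxE.
by move: ci; rewrite (hind c hs (H q hq c hs hj) i) eqxx.
Qed.

Lemma sum5 (R : realType) m (c F G1 G2 G3 G4 G5 : 'I_m -> R) (al b1 b2 b3 b4 b5 : R) :
  \sum_i c i = 0 ->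
  (forall i, F i = al + b1 * G1 i + b2 * G2 i + b3 * G3 i + b4 * G4 i + b5 * G5 i) ->
  \sum_i c i * G1 i = 0 -> \sum_i c i * G2 i = 0 -> \sum_i c i * G3 i = 0 ->
  \sum_i c i * G4 i = 0 -> \sum_i c i * G5 i = 0 -> \sum_i c i * F i = 0.
Proof.
move=> h0 hF h1 h2 h3 h4 h5.
have -> : \sum_i c i * F i = al * \sum_i c i + b1 * \sum_i c i * G1 i
   + b2 * \sum_i c i * G2 i + b3 * \sum_i c i * G3 i + b4 * \sum_i c i * G4 i
   + b5 * \sum_i c i * G5 i.
  rewrite !big_distrr -!big_split; apply: eq_bigr => i _ /=; rewrite hF; ring.
by rewrite h0 h1 h2 h3 h4 h5; ring.
Qed.

Definition key := (bool * bool * bool * bool)%type.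
Definition selL n (L : seq key) (j : 'I_n) : key := nth (false, false, false, false) L j.

Lemma hjn (R : realType) m n (L : seq key) (c : 'I_m -> R) (q : 'I_m -> behav R) :
  (forall j : 'I_n, \sum_i c i * ev (q i) (selL L j) = 0) ->
  forall k, (k < n)%N -> \sum_i c i * ev (q i) (nth (false, false, false, false) L k) = 0.
Proof. by move=> h k hk; exact: (h (Ordinal hk)). Qed.

Lemma sum11 (R : realType) (e : R) m (c : 'I_m -> R) (q : 'I_m -> behav R) x y :
  (forall i, in_P e (q i)) -> \sum_i c i = 0 ->
  \sum_i c i * q i false false x y = 0 -> \sum_i c i * q i false true x y = 0 ->
  \sum_i c i * q i true false x y = 0 -> \sum_i c i * q i true true x y = 0.
Proof.
move=> hq h0 h1 h2 h3.
apply: (sum5 (al := 1) (b1 := -1) (b2 := -1) (b3 := -1) (b4 := 0) (b5 := 0) h0 _ h1 h2 h3 h1 h1).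
by move=> i /=; have := norm1 x y (hq i); lra.
Qed.

Definition L12 : seq key :=
  [:: (false,false,false,false); (false,true,false,false); (true,false,false,false);
      (false,false,false,true); (false,true,false,true); (true,false,false,true);
      (false,false,true,false); (false,true,true,false); (true,false,true,false);
      (false,false,true,true); (false,true,true,true); (true,false,true,true)].

Lemma recP (R : realType) (e : R) (q : 'I_14 -> behav R) :
  (forall i, in_P e (q i)) -> forall c : 'I_14 -> R,
     \sum_i c i = 0 -> (forall j : 'I_12, \sum_i c i * ev (q i) (selL L12 j) = 0) ->
     forall a b x y, \sum_i c i * q i a b x y = 0.
Proof.
move=> hq c h0 /hjn hj.
move: (hj 0%N isT) (hj 1%N isT) (hj 2%N isT) (hj 3%N isT) (hj 4%N isT) (hj 5%N isT)
  (hj 6%N isT) (hj 7%N isT) (hj 8%N isT) (hj 9%N isT) (hj 10%N isT) (hj 11%N isT) => /=.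
move=> s1 s2 s3 s4 s5 s6 s7 s8 s9 s10 s11 s12.
have t1 := sum11 hq h0 s1 s2 s3.
have t2 := sum11 hq h0 s4 s5 s6.
have t3 := sum11 hq h0 s7 s8 s9.
have t4 := sum11 hq h0 s10 s11 s12.
by case; case; case; case.
Qed.

Definition L11 : seq key := behead L12.

Lemma recF (R : realType) (e : R) (q : 'I_13 -> behav R) : e < 1 ->
  (forall i, in_P e (q i) /\ ineq_lhs e (q i) = e * (1 - e)) -> forall c : 'I_13 -> R,
     \sum_i c i = 0 -> (forall j : 'I_11, \sum_i c i * ev (q i) (selL L11 j) = 0) ->
     forall a b x y, \sum_i c i * q i a b x y = 0.
Proof.
move=> e1 hqF c h0 /hjn hj.
have hq : forall i, in_P e (q i) by move=> i; case: (hqF i).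
move: (hj 0%N isT) (hj 1%N isT) (hj 2%N isT) (hj 3%N isT) (hj 4%N isT) (hj 5%N isT)
  (hj 6%N isT) (hj 7%N isT) (hj 8%N isT) (hj 9%N isT) (hj 10%N isT) => /=.
move=> s2 s3 s4 s5 s6 s7 s8 s9 s10 s11 s12.
have s1' : \sum_i c i * ((1 - e)^+2 * q i false false false false) = 0.
  apply: (sum5 (al := 0) (b1 := e * (1 - e)) (b2 := e * (1 - e)) (b3 := 1) (b4 := 1) (b5 := 1)
    h0 _ s2 s3 s5 s9 s10).
  move=> i /=; have N := norm1 false false (hq i).
  have [_ Fq] := hqF i; rewrite /ineq_lhs in Fq.
  have E : q i true true false false = 1 - q i false false false false
     - q i false true false false - q i true false false false by lra.
  rewrite E in Fq; move/eqP: Fq; rewrite -subr_eq0 => /eqP Fq0.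
  apply/eqP; rewrite -subr_eq0; apply/eqP; rewrite -[RHS]Fq0; ring.
have s1 : \sum_i c i * q i false false false false = 0.
  move: s1'; under eq_bigr do rewrite mulrCA; rewrite -big_distrr /=.
  move/eqP; rewrite mulf_eq0 expf_eq0 /= subr_eq0 => /orP[/eqP e1'|/eqP //].
  by move: e1; rewrite -e1' ltxx.
have t1 := sum11 hq h0 s1 s2 s3.
have t2 := sum11 hq h0 s4 s5 s6.
have t3 := sum11 hq h0 s7 s8 s9.
have t4 := sum11 hq h0 s10 s11 s12.
by case; case; case; case.
Qed.

Definition L8 : seq key :=
  [:: (false,false,false,false); (false,false,false,true); (false,false,true,false);
      (false,false,true,true); (false,true,false,false); (false,true,true,false);
      (true,false,false,false); (true,false,false,true)].

Lemma rec0_core (R : realType) m (q : 'I_m -> behav R) (c : 'I_m -> R) :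
  (forall i, in_P 0 (q i)) -> \sum_i c i = 0 ->
  \sum_i c i * q i false false false false = 0 ->
  \sum_i c i * q i false false false true = 0 ->
  \sum_i c i * q i false false true false = 0 ->
  \sum_i c i * q i false false true true = 0 ->
  \sum_i c i * q i false true false false = 0 ->
  \sum_i c i * q i false true true false = 0 ->
  \sum_i c i * q i true false false false = 0 ->
  \sum_i c i * q i true false false true = 0 ->
  forall a b x y, \sum_i c i * q i a b x y = 0.
Proof.
move=> hq h0 s1 s2 s3 s4 s5 s6 s7 s8.
have u1 : \sum_i c i * q i false true false true = 0.
  apply: (sum5 (al := 0) (b1 := 1) (b2 := 1) (b3 := -1) (b4 := 0) (b5 := 0) h0 _ s1 s5 s2 s1 s1).
  by move=> i /=; have := margA false (hq i); lra.
have u2 : \sum_i c i * q i false true true true = 0.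
  apply: (sum5 (al := 0) (b1 := 1) (b2 := 1) (b3 := -1) (b4 := 0) (b5 := 0) h0 _ s3 s6 s4 s1 s1).
  by move=> i /=; have := margA true (hq i); lra.
have u3 : \sum_i c i * q i true false true false = 0.
  apply: (sum5 (al := 0) (b1 := 1) (b2 := 1) (b3 := -1) (b4 := 0) (b5 := 0) h0 _ s1 s7 s3 s1 s1).
  by move=> i /=; have := margB false (hq i); lra.
have u4 : \sum_i c i * q i true false true true = 0.
  apply: (sum5 (al := 0) (b1 := 1) (b2 := 1) (b3 := -1) (b4 := 0) (b5 := 0) h0 _ s2 s8 s4 s1 s1).
  by move=> i /=; have := margB true (hq i); lra.
have t1 := sum11 hq h0 s1 s5 s7.
have t2 := sum11 hq h0 s2 u1 s8.
have t3 := sum11 hq h0 s3 s6 u3.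
have t4 := sum11 hq h0 s4 u2 u4.
by case; case; case; case.
Qed.

Lemma rec0 (R : realType) (q : 'I_10 -> behav R) :
  (forall i, in_P 0 (q i)) -> forall c : 'I_10 -> R,
     \sum_i c i = 0 -> (forall j : 'I_8, \sum_i c i * ev (q i) (selL L8 j) = 0) ->
     forall a b x y, \sum_i c i * q i a b x y = 0.
Proof.
move=> hq c h0 /hjn hj.
move: (hj 0%N isT) (hj 1%N isT) (hj 2%N isT) (hj 3%N isT) (hj 4%N isT) (hj 5%N isT)
  (hj 6%N isT) (hj 7%N isT) => /=.
exact: rec0_core.
Qed.

Definition L7 : seq key := behead L8.

Lemma recF0 (R : realType) (q : 'I_9 -> behav R) :
  (forall i, in_P 0 (q i) /\ ineq_lhs 0 (q i) = 0 * (1 - 0)) -> forall c : 'I_9 -> R,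
     \sum_i c i = 0 -> (forall j : 'I_7, \sum_i c i * ev (q i) (selL L7 j) = 0) ->
     forall a b x y, \sum_i c i * q i a b x y = 0.
Proof.
move=> hqF c h0 /hjn hj.
have hq : forall i, in_P 0 (q i) by move=> i; case: (hqF i).
move: (hj 0%N isT) (hj 1%N isT) (hj 2%N isT) (hj 3%N isT) (hj 4%N isT) (hj 5%N isT)
  (hj 6%N isT) => /= s2 s3 s4 s5 s6 s7 s8.
apply: rec0_core => //.
apply: (sum5 (al := 0) (b1 := 1) (b2 := 1) (b3 := -1) (b4 := -1) (b5 := -1) h0 _ s2 s3 s4 s5 s7).
move=> i /=; have := margA false (hq i); have := margB false (hq i).
have [_ Fq] := hqF i; move: Fq; rewrite /ineq_lhs.
rewrite ?subr0 ?mul0r ?mul1r ?mulr0 ?addr0; lra.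
Qed.

Lemma aux13 (R : realType) (e c0 c1 c2 c3 c4 c5 c6 c7 c8 c9 c10 c11 c12 : R) :
  e != 0 -> 1 - e != 0 ->
  c0 + c1 + c2 + c3 + c4 + c5 + c6 + c7 + c8 + c9 + c10 + c11 + c12 = 0 ->
  c0 * (1 * 1) + c1 * (0 * 0) + c2 * (e * 1) + c3 * (1 * 1) + c4 * (0 * 0) + c5 * (0 * 0) + c6 * (1 * e) + c7 * (1 * 1) + c8 * (e * 1) + c9 * (0 * 0) + c10 * (0 * 0) + c11 * (0 * 0) + c12 * (0 * 1) = 0 ->
  c0 * ((1 - e) * 1) + c1 * (0 * 0) + c2 * (0 * 0) + c3 * ((1 - e) * e) + c4 * (0 * 0) + c5 * (0 * e) + c6 * (1 * 1) + c7 * ((1 - e) * 1) + c8 * (0 * e) + c9 * (0 * e) + c10 * (0 * 1) + c11 * (e * 1) + c12 * (0 * 0) = 0 ->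
  c0 * (e * (1 - e)) + c1 * (1 * e) + c2 * (1 * 1) + c3 * (1 * 1) + c4 * (1 * 0) + c5 * (1 * 0) + c6 * (e * 0) + c7 * (1 * 1) + c8 * (1 * 1) + c9 * (e * 0) + c10 * (e * 0) + c11 * (0 * 0) + c12 * (1 * 1) = 0 ->
  c0 * (0 * (1 - e)) + c1 * (1 * 0) + c2 * ((1 - e) * 0) + c3 * ((1 - e) * 0) + c4 * (1 * 0) + c5 * (1 * 0) + c6 * (0 * (1 - e)) + c7 * ((1 - e) * (1 - e)) + c8 * (1 * 0) + c9 * (0 * 0) + c10 * (0 * 1) + c11 * (0 * 1) + c12 * (1 * 0) = 0 ->
  c0 * (1 * 0) + c1 * (0 * 1) + c2 * (e * 0) + c3 * (1 * 0) + c4 * (0 * 1) + c5 * (0 * 1) + c6 * (1 * (1 - e)) + c7 * (1 * 0) + c8 * (e * 0) + c9 * (0 * 1) + c10 * (0 * 1) + c11 * (0 * 1) + c12 * (0 * 0) = 0 ->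
  c0 * ((1 - e) * 0) + c1 * (0 * 1) + c2 * (0 * 1) + c3 * ((1 - e) * (1 - e)) + c4 * (0 * 1) + c5 * (0 * (1 - e)) + c6 * (1 * 0) + c7 * ((1 - e) * 0) + c8 * (0 * (1 - e)) + c9 * (0 * (1 - e)) + c10 * (0 * 0) + c11 * (e * 0) + c12 * (0 * 1) = 0 ->
  c0 * (e * e) + c1 * (1 * (1 - e)) + c2 * (1 * 0) + c3 * (1 * 0) + c4 * (1 * 1) + c5 * (1 * 1) + c6 * (e * 1) + c7 * (1 * 0) + c8 * (1 * 0) + c9 * (e * 1) + c10 * (e * 1) + c11 * (0 * 1) + c12 * (1 * 0) = 0 ->
  c0 * (0 * e) + c1 * (1 * 1) + c2 * ((1 - e) * 1) + c3 * ((1 - e) * 1) + c4 * (1 * 1) + c5 * (1 * 1) + c6 * (0 * e) + c7 * ((1 - e) * e) + c8 * (1 * 1) + c9 * (0 * 1) + c10 * (0 * 0) + c11 * (0 * 0) + c12 * (1 * 1) = 0 ->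
  c0 * (0 * 1) + c1 * (1 * 0) + c2 * ((1 - e) * 1) + c3 * (0 * 1) + c4 * (1 * 0) + c5 * (1 * 0) + c6 * (0 * e) + c7 * (0 * 1) + c8 * ((1 - e) * 1) + c9 * (1 * 0) + c10 * (1 * 0) + c11 * (1 * 0) + c12 * (1 * 1) = 0 ->
  c0 * (e * 1) + c1 * (1 * 0) + c2 * (1 * 0) + c3 * (e * e) + c4 * (1 * 0) + c5 * (1 * e) + c6 * (0 * 1) + c7 * (e * 1) + c8 * (1 * e) + c9 * (1 * e) + c10 * (1 * 1) + c11 * ((1 - e) * 1) + c12 * (1 * 0) = 0 ->
  c0 * ((1 - e) * (1 - e)) + c1 * (0 * e) + c2 * (0 * 1) + c3 * (0 * 1) + c4 * (0 * 0) + c5 * (0 * 0) + c6 * ((1 - e) * 0) + c7 * (0 * 1) + c8 * (0 * 1) + c9 * ((1 - e) * 0) + c10 * ((1 - e) * 0) + c11 * (1 * 0) + c12 * (0 * 1) = 0 ->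
  c0 * (1 * (1 - e)) + c1 * (0 * 0) + c2 * (e * 0) + c3 * (e * 0) + c4 * (0 * 0) + c5 * (0 * 0) + c6 * (1 * (1 - e)) + c7 * (e * (1 - e)) + c8 * (0 * 0) + c9 * (1 * 0) + c10 * (1 * 1) + c11 * (1 * 1) + c12 * (0 * 0) = 0 ->
  c0 * (0 * 0) + c1 * (1 * 1) + c2 * ((1 - e) * 0) + c3 * (0 * 0) + c4 * (1 * 1) + c5 * (1 * 1) + c6 * (0 * (1 - e)) + c7 * (0 * 0) + c8 * ((1 - e) * 0) + c9 * (1 * 1) + c10 * (1 * 1) + c11 * (1 * 1) + c12 * (1 * 0) = 0 ->
  c0 * (e * 0) + c1 * (1 * 1) + c2 * (1 * 1) + c3 * (e * (1 - e)) + c4 * (1 * 1) + c5 * (1 * (1 - e)) + c6 * (0 * 0) + c7 * (e * 0) + c8 * (1 * (1 - e)) + c9 * (1 * (1 - e)) + c10 * (1 * 0) + c11 * ((1 - e) * 0) + c12 * (1 * 1) = 0 ->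
  c0 * ((1 - e) * e) + c1 * (0 * (1 - e)) + c2 * (0 * 0) + c3 * (0 * 0) + c4 * (0 * 1) + c5 * (0 * 1) + c6 * ((1 - e) * 1) + c7 * (0 * 0) + c8 * (0 * 0) + c9 * ((1 - e) * 1) + c10 * ((1 - e) * 1) + c11 * (1 * 1) + c12 * (0 * 0) = 0 ->
  c0 * (1 * e) + c1 * (0 * 1) + c2 * (e * 1) + c3 * (e * 1) + c4 * (0 * 1) + c5 * (0 * 1) + c6 * (1 * e) + c7 * (e * e) + c8 * (0 * 1) + c9 * (1 * 1) + c10 * (1 * 0) + c11 * (1 * 0) + c12 * (0 * 1) = 0 ->
  c0 = 0 /\ c1 = 0 /\ c2 = 0 /\ c3 = 0 /\ c4 = 0 /\ c5 = 0 /\ c6 = 0 /\ c7 = 0 /\ c8 = 0 /\ c9 = 0 /\ c10 = 0 /\ c11 = 0 /\ c12 = 0.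
Proof.
move=> ne ne1 Esum E0000 E0001 E0010 E0011 E0100 E0101 E0110 E0111 E1000 E1001 E1010 E1011 E1100 E1101 E1110 E1111.
have Z7 : c7 = 0.
  have H : ((1 - e) * (1 - e)) * c7 = 0 by rewrite -[RHS]E0011; ring.
  have nzc : ((1 - e) * (1 - e) : R) != 0 by apply: mulf_neq0; rewrite ?oner_neq0.
  by move/eqP: H; rewrite mulf_eq0 (negbTE nzc) /= => /eqP.
subst c7.
have Z6 : c6 = 0.
  have H : (1 * (1 - e)) * c6 = 0 by rewrite -[RHS]E0100; ring.
  have nzc : (1 * (1 - e) : R) != 0 by apply: mulf_neq0; rewrite ?oner_neq0.
  by move/eqP: H; rewrite mulf_eq0 (negbTE nzc) /= => /eqP.
subst c6.
have Z3 : c3 = 0.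
  have H : ((1 - e) * (1 - e)) * c3 = 0 by rewrite -[RHS]E0101; ring.
  have nzc : ((1 - e) * (1 - e) : R) != 0 by apply: mulf_neq0; rewrite ?oner_neq0.
  by move/eqP: H; rewrite mulf_eq0 (negbTE nzc) /= => /eqP.
subst c3.
have Z0 : c0 = 0.
  have H : ((1 - e) * (1 - e)) * c0 = 0 by rewrite -[RHS]E1010; ring.
  have nzc : ((1 - e) * (1 - e) : R) != 0 by apply: mulf_neq0; rewrite ?oner_neq0.
  by move/eqP: H; rewrite mulf_eq0 (negbTE nzc) /= => /eqP.
subst c0.
have Z11 : c11 = 0.
  have H : (e * 1) * c11 = 0 by rewrite -[RHS]E0001; ring.
  have nzc : (e * 1 : R) != 0 by apply: mulf_neq0; rewrite ?oner_neq0.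
  by move/eqP: H; rewrite mulf_eq0 (negbTE nzc) /= => /eqP.
subst c11.
have Z10 : c10 = 0.
  have H : (1 * 1) * c10 = 0 by rewrite -[RHS]E1011; ring.
  have nzc : (1 * 1 : R) != 0 by apply: mulf_neq0; rewrite ?oner_neq0.
  by move/eqP: H; rewrite mulf_eq0 (negbTE nzc) /= => /eqP.
subst c10.
have Z9 : c9 = 0.
  have H : ((1 - e) * 1) * c9 = 0 by rewrite -[RHS]E1110; ring.
  have nzc : ((1 - e) * 1 : R) != 0 by apply: mulf_neq0; rewrite ?oner_neq0.
  by move/eqP: H; rewrite mulf_eq0 (negbTE nzc) /= => /eqP.
subst c9.
have Z2 : c2 = 0.
  have H : (e * 1) * c2 = 0 by rewrite -[RHS]E1111; ring.
  have nzc : (e * 1 : R) != 0 by apply: mulf_neq0; rewrite ?oner_neq0.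
  by move/eqP: H; rewrite mulf_eq0 (negbTE nzc) /= => /eqP.
subst c2.
have Z8 : c8 = 0.
  have H : (e * 1) * c8 = 0 by rewrite -[RHS]E0000; ring.
  have nzc : (e * 1 : R) != 0 by apply: mulf_neq0; rewrite ?oner_neq0.
  by move/eqP: H; rewrite mulf_eq0 (negbTE nzc) /= => /eqP.
subst c8.
have Z12 : c12 = 0.
  have H : (1 * 1) * c12 = 0 by rewrite -[RHS]E1000; ring.
  have nzc : (1 * 1 : R) != 0 by apply: mulf_neq0; rewrite ?oner_neq0.
  by move/eqP: H; rewrite mulf_eq0 (negbTE nzc) /= => /eqP.
subst c12.
have Z1 : c1 = 0.
  have H : (1 * e) * c1 = 0 by rewrite -[RHS]E0010; ring.
  have nzc : (1 * e : R) != 0 by apply: mulf_neq0; rewrite ?oner_neq0.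
  by move/eqP: H; rewrite mulf_eq0 (negbTE nzc) /= => /eqP.
subst c1.
have Z5 : c5 = 0.
  have H : (1 * e) * c5 = 0 by rewrite -[RHS]E1001; ring.
  have nzc : (1 * e : R) != 0 by apply: mulf_neq0; rewrite ?oner_neq0.
  by move/eqP: H; rewrite mulf_eq0 (negbTE nzc) /= => /eqP.
subst c5.
have Z4 : c4 = 0.
  have H : (1 * 1) * c4 = 0 by rewrite -[RHS]Esum; ring.
  have nzc : (1 * 1 : R) != 0 by apply: mulf_neq0; rewrite ?oner_neq0.
  by move/eqP: H; rewrite mulf_eq0 (negbTE nzc) /= => /eqP.
subst c4.
by do !split.
Qed.
Lemma aux9 (R : realType) (e c0 c1 c2 c3 c4 c5 c6 c7 c8 : R) :
  c0 + c1 + c2 + c3 + c4 + c5 + c6 + c7 + c8 = 0 ->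
  c0 * (0 * 0) + c1 * (0 * 1) + c2 * (1 * 1) + c3 * (1 * 1) + c4 * (0 * 0) + c5 * (1 * 1) + c6 * (0 * 0) + c7 * (1 * 0) + c8 * (1 * 0) = 0 ->
  c0 * (0 * 1) + c1 * (0 * 0) + c2 * (1 * 1) + c3 * (1 * 1) + c4 * (0 * 0) + c5 * (1 * 0) + c6 * (0 * 0) + c7 * (1 * 1) + c8 * (1 * 0) = 0 ->
  c0 * (0 * 0) + c1 * (1 * 1) + c2 * (0 * 1) + c3 * (1 * 1) + c4 * (1 * 0) + c5 * (1 * 1) + c6 * (0 * 0) + c7 * (0 * 0) + c8 * (1 * 0) = 0 ->
  c0 * (0 * 1) + c1 * (1 * 0) + c2 * (0 * 1) + c3 * (1 * 1) + c4 * (1 * 0) + c5 * (1 * 0) + c6 * (0 * 0) + c7 * (0 * 1) + c8 * (1 * 0) = 0 ->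
  c0 * (0 * 1) + c1 * (0 * 0) + c2 * (1 * 0) + c3 * (1 * 0) + c4 * (0 * 1) + c5 * (1 * 0) + c6 * (0 * 1) + c7 * (1 * 1) + c8 * (1 * 1) = 0 ->
  c0 * (0 * 0) + c1 * (0 * 1) + c2 * (1 * 0) + c3 * (1 * 0) + c4 * (0 * 1) + c5 * (1 * 1) + c6 * (0 * 1) + c7 * (1 * 0) + c8 * (1 * 1) = 0 ->
  c0 * (0 * 1) + c1 * (1 * 0) + c2 * (0 * 0) + c3 * (1 * 0) + c4 * (1 * 1) + c5 * (1 * 0) + c6 * (0 * 1) + c7 * (0 * 1) + c8 * (1 * 1) = 0 ->
  c0 * (0 * 0) + c1 * (1 * 1) + c2 * (0 * 0) + c3 * (1 * 0) + c4 * (1 * 1) + c5 * (1 * 1) + c6 * (0 * 1) + c7 * (0 * 0) + c8 * (1 * 1) = 0 ->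
  c0 * (1 * 0) + c1 * (1 * 1) + c2 * (0 * 1) + c3 * (0 * 1) + c4 * (1 * 0) + c5 * (0 * 1) + c6 * (1 * 0) + c7 * (0 * 0) + c8 * (0 * 0) = 0 ->
  c0 * (1 * 1) + c1 * (1 * 0) + c2 * (0 * 1) + c3 * (0 * 1) + c4 * (1 * 0) + c5 * (0 * 0) + c6 * (1 * 0) + c7 * (0 * 1) + c8 * (0 * 0) = 0 ->
  c0 * (1 * 0) + c1 * (0 * 1) + c2 * (1 * 1) + c3 * (0 * 1) + c4 * (0 * 0) + c5 * (0 * 1) + c6 * (1 * 0) + c7 * (1 * 0) + c8 * (0 * 0) = 0 ->
  c0 * (1 * 1) + c1 * (0 * 0) + c2 * (1 * 1) + c3 * (0 * 1) + c4 * (0 * 0) + c5 * (0 * 0) + c6 * (1 * 0) + c7 * (1 * 1) + c8 * (0 * 0) = 0 ->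
  c0 * (1 * 1) + c1 * (1 * 0) + c2 * (0 * 0) + c3 * (0 * 0) + c4 * (1 * 1) + c5 * (0 * 0) + c6 * (1 * 1) + c7 * (0 * 1) + c8 * (0 * 1) = 0 ->
  c0 * (1 * 0) + c1 * (1 * 1) + c2 * (0 * 0) + c3 * (0 * 0) + c4 * (1 * 1) + c5 * (0 * 1) + c6 * (1 * 1) + c7 * (0 * 0) + c8 * (0 * 1) = 0 ->
  c0 * (1 * 1) + c1 * (0 * 0) + c2 * (1 * 0) + c3 * (0 * 0) + c4 * (0 * 1) + c5 * (0 * 0) + c6 * (1 * 1) + c7 * (1 * 1) + c8 * (0 * 1) = 0 ->
  c0 * (1 * 0) + c1 * (0 * 1) + c2 * (1 * 0) + c3 * (0 * 0) + c4 * (0 * 1) + c5 * (0 * 1) + c6 * (1 * 1) + c7 * (1 * 0) + c8 * (0 * 1) = 0 ->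
  c0 = 0 /\ c1 = 0 /\ c2 = 0 /\ c3 = 0 /\ c4 = 0 /\ c5 = 0 /\ c6 = 0 /\ c7 = 0 /\ c8 = 0.
Proof.
move=> Esum E0000 E0001 E0010 E0011 E0100 E0101 E0110 E0111 E1000 E1001 E1010 E1011 E1100 E1101 E1110 E1111.
have Z3 : c3 = 0.
  have H : (1 * 1) * c3 = 0 by rewrite -[RHS]E0011; ring.
  have nzc : (1 * 1 : R) != 0 by apply: mulf_neq0; rewrite ?oner_neq0.
  by move/eqP: H; rewrite mulf_eq0 (negbTE nzc) /= => /eqP.
subst c3.
have Z1 : c1 = 0.
  have H : (1 * 1) * c1 = 0 by rewrite -[RHS]E1000; ring.
  have nzc : (1 * 1 : R) != 0 by apply: mulf_neq0; rewrite ?oner_neq0.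
  by move/eqP: H; rewrite mulf_eq0 (negbTE nzc) /= => /eqP.
subst c1.
have Z5 : c5 = 0.
  have H : (1 * 1) * c5 = 0 by rewrite -[RHS]E0010; ring.
  have nzc : (1 * 1 : R) != 0 by apply: mulf_neq0; rewrite ?oner_neq0.
  by move/eqP: H; rewrite mulf_eq0 (negbTE nzc) /= => /eqP.
subst c5.
have Z2 : c2 = 0.
  have H : (1 * 1) * c2 = 0 by rewrite -[RHS]E0000; ring.
  have nzc : (1 * 1 : R) != 0 by apply: mulf_neq0; rewrite ?oner_neq0.
  by move/eqP: H; rewrite mulf_eq0 (negbTE nzc) /= => /eqP.
subst c2.
have Z7 : c7 = 0.
  have H : (1 * 1) * c7 = 0 by rewrite -[RHS]E0001; ring.
  have nzc : (1 * 1 : R) != 0 by apply: mulf_neq0; rewrite ?oner_neq0.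
  by move/eqP: H; rewrite mulf_eq0 (negbTE nzc) /= => /eqP.
subst c7.
have Z8 : c8 = 0.
  have H : (1 * 1) * c8 = 0 by rewrite -[RHS]E0100; ring.
  have nzc : (1 * 1 : R) != 0 by apply: mulf_neq0; rewrite ?oner_neq0.
  by move/eqP: H; rewrite mulf_eq0 (negbTE nzc) /= => /eqP.
subst c8.
have Z4 : c4 = 0.
  have H : (1 * 1) * c4 = 0 by rewrite -[RHS]E0110; ring.
  have nzc : (1 * 1 : R) != 0 by apply: mulf_neq0; rewrite ?oner_neq0.
  by move/eqP: H; rewrite mulf_eq0 (negbTE nzc) /= => /eqP.
subst c4.
have Z0 : c0 = 0.
  have H : (1 * 1) * c0 = 0 by rewrite -[RHS]E1001; ring.
  have nzc : (1 * 1 : R) != 0 by apply: mulf_neq0; rewrite ?oner_neq0.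
  by move/eqP: H; rewrite mulf_eq0 (negbTE nzc) /= => /eqP.
subst c0.
have Z6 : c6 = 0.
  have H : (1 * 1) * c6 = 0 by rewrite -[RHS]Esum; ring.
  have nzc : (1 * 1 : R) != 0 by apply: mulf_neq0; rewrite ?oner_neq0.
  by move/eqP: H; rewrite mulf_eq0 (negbTE nzc) /= => /eqP.
subst c6.
by do !split.
Qed.

Definition vtx (R : realType) (e : R) (k : nat) : R * R :=
  match k with 0 => (0, 0) | 1 => (1, 1) | 2 => (0, e) | 3 => (e, 0)
  | 4 => (1, 1 - e) | _ => (1 - e, 1) end.

Definition pt (R : realType) (e : R) (l0 l1 l2 l3 : nat) : behav R :=
  mkpt (fun x y => if y then (vtx e (if x then l1 else l0)).2 else (vtx e (if x then l1 else l0)).1)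
       (fun x y => if x then (vtx e (if y then l3 else l2)).2 else (vtx e (if y then l3 else l2)).1).

Definition ptL (R : realType) (e : R) (l : nat * nat * nat * nat) : behav R :=
  let '(l0, l1, l2, l3) := l in pt e l0 l1 l2 l3.

Lemma vtx_ok (R : realType) (e : R) k : 0 <= e -> e < 1 ->
  [/\ 0 <= (vtx e k).1 <= 1, 0 <= (vtx e k).2 <= 1 & `|(vtx e k).1 - (vtx e k).2| <= e].
Proof.
move=> e0 e1.
have H1 : 0 <= 1 - e <= 1 by apply/andP; split; lra.
have H2 : 0 <= e <= 1 by apply/andP; split; lra.
have H3 : `|1 - (1 - e)| <= e by rewrite (_ : 1 - (1 - e) = e) ?ger0_norm //; ring.
have H4 : `|(1 - e) - 1| <= e by rewrite (_ : (1 - e) - 1 = - e) ?normrN ?ger0_norm //; ring.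
case: k => [|[|[|[|[|k]]]]] /=; rewrite ?subrr ?normr0 ?ler01 ?lexx //=;
  rewrite ?sub0r ?subr0 ?normrN ?ger0_norm //.
Qed.

Lemma in_P_ptL (R : realType) (e : R) l : 0 <= e -> e < 1 -> in_P e (ptL e l).
Proof.
move=> e0 e1; case: l => [[[l0 l1] l2] l3] /=.
apply: in_P_mkpt.
- move=> x y; have [h1 h2 _] := vtx_ok (if x then l1 else l0) e0 e1; by case: y.
- move=> x y; have [h1 h2 _] := vtx_ok (if y then l3 else l2) e0 e1; by case: x.
- by move=> x /=; have [_ _ h] := vtx_ok (if x then l1 else l0) e0 e1.
- by move=> y /=; have [_ _ h] := vtx_ok (if y then l3 else l2) e0 e1.
Qed.

Definition labs13 : seq (nat * nat * nat * nat) :=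
  [:: (4, 3, 4, 4); (0, 1, 2, 0); (3, 4, 1, 0); (4, 4, 1, 3); (0, 1, 0, 0); (0, 1, 0, 3); (1, 3, 3, 4); (4, 4, 1, 4); (3, 1, 1, 3); (0, 3, 0, 3); (0, 3, 0, 1); (2, 0, 0, 1); (0, 1, 1, 0)].

Definition labs9 : seq (nat * nat * nat * nat) :=
  [:: (0, 0, 0, 1); (3, 1, 1, 0); (1, 3, 4, 1); (1, 4, 1, 4); (0, 1, 0, 0); (4, 1, 1, 3); (0, 0, 0, 0); (1, 0, 3, 1); (1, 1, 0, 0)].

Definition q13 (R : realType) (e : R) (i : 'I_13) : behav R := ptL e (nth (0,0,0,0)%N labs13 i).
Definition q12 (R : realType) (e : R) (i : 'I_12) : behav R := ptL e (nth (0,0,0,0)%N labs13 i).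
Definition q9 (R : realType) (e : R) (i : 'I_9) : behav R := ptL e (nth (0,0,0,0)%N labs9 i).
Definition q8 (R : realType) (e : R) (i : 'I_8) : behav R := ptL e (nth (0,0,0,0)%N labs9 i).


Lemma sum13 (R : realType) (F : 'I_13 -> R) : \sum_(i < 13) F i = F (@Ordinal 13 0 isT) + F (@Ordinal 13 1 isT) + F (@Ordinal 13 2 isT) + F (@Ordinal 13 3 isT) + F (@Ordinal 13 4 isT) + F (@Ordinal 13 5 isT) + F (@Ordinal 13 6 isT) + F (@Ordinal 13 7 isT) + F (@Ordinal 13 8 isT) + F (@Ordinal 13 9 isT) + F (@Ordinal 13 10 isT) + F (@Ordinal 13 11 isT) + F (@Ordinal 13 12 isT).
Proof.
rewrite !big_ord_recl big_ord0 addr0 !addrA; repeat (congr (_ + _)).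
all: by apply: congr1; apply: val_inj.
Qed.

Lemma sum12 (R : realType) (F : 'I_12 -> R) : \sum_(i < 12) F i = F (@Ordinal 12 0 isT) + F (@Ordinal 12 1 isT) + F (@Ordinal 12 2 isT) + F (@Ordinal 12 3 isT) + F (@Ordinal 12 4 isT) + F (@Ordinal 12 5 isT) + F (@Ordinal 12 6 isT) + F (@Ordinal 12 7 isT) + F (@Ordinal 12 8 isT) + F (@Ordinal 12 9 isT) + F (@Ordinal 12 10 isT) + F (@Ordinal 12 11 isT).
Proof.
rewrite !big_ord_recl big_ord0 addr0 !addrA; repeat (congr (_ + _)).
all: by apply: congr1; apply: val_inj.
Qed.

Lemma sum9 (R : realType) (F : 'I_9 -> R) : \sum_(i < 9) F i = F (@Ordinal 9 0 isT) + F (@Ordinal 9 1 isT) + F (@Ordinal 9 2 isT) + F (@Ordinal 9 3 isT) + F (@Ordinal 9 4 isT) + F (@Ordinal 9 5 isT) + F (@Ordinal 9 6 isT) + F (@Ordinal 9 7 isT) + F (@Ordinal 9 8 isT).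
Proof.
rewrite !big_ord_recl big_ord0 addr0 !addrA; repeat (congr (_ + _)).
all: by apply: congr1; apply: val_inj.
Qed.

Lemma sum8 (R : realType) (F : 'I_8 -> R) : \sum_(i < 8) F i = F (@Ordinal 8 0 isT) + F (@Ordinal 8 1 isT) + F (@Ordinal 8 2 isT) + F (@Ordinal 8 3 isT) + F (@Ordinal 8 4 isT) + F (@Ordinal 8 5 isT) + F (@Ordinal 8 6 isT) + F (@Ordinal 8 7 isT).
Proof.
rewrite !big_ord_recl big_ord0 addr0 !addrA; repeat (congr (_ + _)).
all: by apply: congr1; apply: val_inj.
Qed.

Lemma indep13 (R : realType) (e : R) : 0 < e -> e < 1 -> aff_indep (q13 e).
Proof.
move=> e0 e1.
have ne : e != 0 by rewrite gt_eqF.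
have ne1 : 1 - e != 0 by rewrite subr_eq0 eq_sym lt_eqF.
move=> c h0 hc.
rewrite sum13 in h0.
have E0000 := hc false false false false; rewrite sum13 /q13 /ptL /pt /mkpt /vtx /= in E0000.
have E0001 := hc false false false true; rewrite sum13 /q13 /ptL /pt /mkpt /vtx /= in E0001.
have E0010 := hc false false true false; rewrite sum13 /q13 /ptL /pt /mkpt /vtx /= in E0010.
have E0011 := hc false false true true; rewrite sum13 /q13 /ptL /pt /mkpt /vtx /= in E0011.
have E0100 := hc false true false false; rewrite sum13 /q13 /ptL /pt /mkpt /vtx /= in E0100.
have E0101 := hc false true false true; rewrite sum13 /q13 /ptL /pt /mkpt /vtx /= in E0101.
have E0110 := hc false true true false; rewrite sum13 /q13 /ptL /pt /mkpt /vtx /= in E0110.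
have E0111 := hc false true true true; rewrite sum13 /q13 /ptL /pt /mkpt /vtx /= in E0111.
have E1000 := hc true false false false; rewrite sum13 /q13 /ptL /pt /mkpt /vtx /= in E1000.
have E1001 := hc true false false true; rewrite sum13 /q13 /ptL /pt /mkpt /vtx /= in E1001.
have E1010 := hc true false true false; rewrite sum13 /q13 /ptL /pt /mkpt /vtx /= in E1010.
have E1011 := hc true false true true; rewrite sum13 /q13 /ptL /pt /mkpt /vtx /= in E1011.
have E1100 := hc true true false false; rewrite sum13 /q13 /ptL /pt /mkpt /vtx /= in E1100.
have E1101 := hc true true false true; rewrite sum13 /q13 /ptL /pt /mkpt /vtx /= in E1101.
have E1110 := hc true true true false; rewrite sum13 /q13 /ptL /pt /mkpt /vtx /= in E1110.
have E1111 := hc true true true true; rewrite sum13 /q13 /ptL /pt /mkpt /vtx /= in E1111.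
have [z0 [z1 [z2 [z3 [z4 [z5 [z6 [z7 [z8 [z9 [z10 [z11 z12]]]]]]]]]]]] := @aux13 R e (c (@Ordinal 13 0 isT)) (c (@Ordinal 13 1 isT)) (c (@Ordinal 13 2 isT)) (c (@Ordinal 13 3 isT)) (c (@Ordinal 13 4 isT)) (c (@Ordinal 13 5 isT)) (c (@Ordinal 13 6 isT)) (c (@Ordinal 13 7 isT)) (c (@Ordinal 13 8 isT)) (c (@Ordinal 13 9 isT)) (c (@Ordinal 13 10 isT)) (c (@Ordinal 13 11 isT)) (c (@Ordinal 13 12 isT)) ne ne1  ltac:(rewrite -[RHS]h0; ring) ltac:(rewrite -[RHS]E0000; ring) ltac:(rewrite -[RHS]E0001; ring) ltac:(rewrite -[RHS]E0010; ring) ltac:(rewrite -[RHS]E0011; ring) ltac:(rewrite -[RHS]E0100; ring) ltac:(rewrite -[RHS]E0101; ring) ltac:(rewrite -[RHS]E0110; ring) ltac:(rewrite -[RHS]E0111; ring) ltac:(rewrite -[RHS]E1000; ring) ltac:(rewrite -[RHS]E1001; ring) ltac:(rewrite -[RHS]E1010; ring) ltac:(rewrite -[RHS]E1011; ring) ltac:(rewrite -[RHS]E1100; ring) ltac:(rewrite -[RHS]E1101; ring) ltac:(rewrite -[RHS]E1110; ring) ltac:(rewrite -[RHS]E1111; ring).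
move=> [k hk].
do 13 (case: k hk => [|k] hk; [by rewrite (bool_irrelevance hk isT) | ]).
by [].
Qed.

Lemma indep12 (R : realType) (e : R) : 0 < e -> e < 1 -> aff_indep (q12 e).
Proof.
move=> e0 e1.
have ne : e != 0 by rewrite gt_eqF.
have ne1 : 1 - e != 0 by rewrite subr_eq0 eq_sym lt_eqF.
move=> c h0 hc.
rewrite sum12 in h0.
have E0000 := hc false false false false; rewrite sum12 /q12 /ptL /pt /mkpt /vtx /= in E0000.
have E0001 := hc false false false true; rewrite sum12 /q12 /ptL /pt /mkpt /vtx /= in E0001.
have E0010 := hc false false true false; rewrite sum12 /q12 /ptL /pt /mkpt /vtx /= in E0010.
have E0011 := hc false false true true; rewrite sum12 /q12 /ptL /pt /mkpt /vtx /= in E0011.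
have E0100 := hc false true false false; rewrite sum12 /q12 /ptL /pt /mkpt /vtx /= in E0100.
have E0101 := hc false true false true; rewrite sum12 /q12 /ptL /pt /mkpt /vtx /= in E0101.
have E0110 := hc false true true false; rewrite sum12 /q12 /ptL /pt /mkpt /vtx /= in E0110.
have E0111 := hc false true true true; rewrite sum12 /q12 /ptL /pt /mkpt /vtx /= in E0111.
have E1000 := hc true false false false; rewrite sum12 /q12 /ptL /pt /mkpt /vtx /= in E1000.
have E1001 := hc true false false true; rewrite sum12 /q12 /ptL /pt /mkpt /vtx /= in E1001.
have E1010 := hc true false true false; rewrite sum12 /q12 /ptL /pt /mkpt /vtx /= in E1010.
have E1011 := hc true false true true; rewrite sum12 /q12 /ptL /pt /mkpt /vtx /= in E1011.
have E1100 := hc true true false false; rewrite sum12 /q12 /ptL /pt /mkpt /vtx /= in E1100.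
have E1101 := hc true true false true; rewrite sum12 /q12 /ptL /pt /mkpt /vtx /= in E1101.
have E1110 := hc true true true false; rewrite sum12 /q12 /ptL /pt /mkpt /vtx /= in E1110.
have E1111 := hc true true true true; rewrite sum12 /q12 /ptL /pt /mkpt /vtx /= in E1111.
have [z0 [z1 [z2 [z3 [z4 [z5 [z6 [z7 [z8 [z9 [z10 [z11 z12]]]]]]]]]]]] := @aux13 R e (c (@Ordinal 12 0 isT)) (c (@Ordinal 12 1 isT)) (c (@Ordinal 12 2 isT)) (c (@Ordinal 12 3 isT)) (c (@Ordinal 12 4 isT)) (c (@Ordinal 12 5 isT)) (c (@Ordinal 12 6 isT)) (c (@Ordinal 12 7 isT)) (c (@Ordinal 12 8 isT)) (c (@Ordinal 12 9 isT)) (c (@Ordinal 12 10 isT)) (c (@Ordinal 12 11 isT)) 0 ne ne1  ltac:(rewrite -[RHS]h0; ring) ltac:(rewrite -[RHS]E0000; ring) ltac:(rewrite -[RHS]E0001; ring) ltac:(rewrite -[RHS]E0010; ring) ltac:(rewrite -[RHS]E0011; ring) ltac:(rewrite -[RHS]E0100; ring) ltac:(rewrite -[RHS]E0101; ring) ltac:(rewrite -[RHS]E0110; ring) ltac:(rewrite -[RHS]E0111; ring) ltac:(rewrite -[RHS]E1000; ring) ltac:(rewrite -[RHS]E1001; ring) ltac:(rewrite -[RHS]E1010; ring) ltac:(rewrite -[RHS]E1011; ring) ltac:(rewrite -[RHS]E1100; ring) ltac:(rewrite -[RHS]E1101; ring) ltac:(rewrite -[RHS]E1110; ring) ltac:(rewrite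 -[RHS]E1111; ring).
move=> [k hk].
do 12 (case: k hk => [|k] hk; [by rewrite (bool_irrelevance hk isT) | ]).
by [].
Qed.

Lemma indep9 (R : realType) : aff_indep (q9 (0 : R)).
Proof.
move=> c h0 hc.
rewrite sum9 in h0.
have E0000 := hc false false false false; rewrite sum9 /q9 /ptL /pt /mkpt /vtx /= in E0000.
have E0001 := hc false false false true; rewrite sum9 /q9 /ptL /pt /mkpt /vtx /= in E0001.
have E0010 := hc false false true false; rewrite sum9 /q9 /ptL /pt /mkpt /vtx /= in E0010.
have E0011 := hc false false true true; rewrite sum9 /q9 /ptL /pt /mkpt /vtx /= in E0011.
have E0100 := hc false true false false; rewrite sum9 /q9 /ptL /pt /mkpt /vtx /= in E0100.
have E0101 := hc false true false true; rewrite sum9 /q9 /ptL /pt /mkpt /vtx /= in E0101.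
have E0110 := hc false true true false; rewrite sum9 /q9 /ptL /pt /mkpt /vtx /= in E0110.
have E0111 := hc false true true true; rewrite sum9 /q9 /ptL /pt /mkpt /vtx /= in E0111.
have E1000 := hc true false false false; rewrite sum9 /q9 /ptL /pt /mkpt /vtx /= in E1000.
have E1001 := hc true false false true; rewrite sum9 /q9 /ptL /pt /mkpt /vtx /= in E1001.
have E1010 := hc true false true false; rewrite sum9 /q9 /ptL /pt /mkpt /vtx /= in E1010.
have E1011 := hc true false true true; rewrite sum9 /q9 /ptL /pt /mkpt /vtx /= in E1011.
have E1100 := hc true true false false; rewrite sum9 /q9 /ptL /pt /mkpt /vtx /= in E1100.
have E1101 := hc true true false true; rewrite sum9 /q9 /ptL /pt /mkpt /vtx /= in E1101.
have E1110 := hc true true true false; rewrite sum9 /q9 /ptL /pt /mkpt /vtx /= in E1110.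
have E1111 := hc true true true true; rewrite sum9 /q9 /ptL /pt /mkpt /vtx /= in E1111.
have [z0 [z1 [z2 [z3 [z4 [z5 [z6 [z7 z8]]]]]]]] := @aux9 R 0 (c (@Ordinal 9 0 isT)) (c (@Ordinal 9 1 isT)) (c (@Ordinal 9 2 isT)) (c (@Ordinal 9 3 isT)) (c (@Ordinal 9 4 isT)) (c (@Ordinal 9 5 isT)) (c (@Ordinal 9 6 isT)) (c (@Ordinal 9 7 isT)) (c (@Ordinal 9 8 isT))  ltac:(rewrite -[RHS]h0; ring) ltac:(rewrite -[RHS]E0000; ring) ltac:(rewrite -[RHS]E0001; ring) ltac:(rewrite -[RHS]E0010; ring) ltac:(rewrite -[RHS]E0011; ring) ltac:(rewrite -[RHS]E0100; ring) ltac:(rewrite -[RHS]E0101; ring) ltac:(rewrite -[RHS]E0110; ring) ltac:(rewrite -[RHS]E0111; ring) ltac:(rewrite -[RHS]E1000; ring) ltac:(rewrite -[RHS]E1001; ring) ltac:(rewrite -[RHS]E1010; ring) ltac:(rewrite -[RHS]E1011; ring) ltac:(rewrite -[RHS]E1100; ring) ltac:(rewrite -[RHS]E1101; ring) ltac:(rewrite -[RHS]E1110; ring) ltac:(rewrite -[RHS]E1111; ring).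
move=> [k hk].
do 9 (case: k hk => [|k] hk; [by rewrite (bool_irrelevance hk isT) | ]).
by [].
Qed.

Lemma indep8 (R : realType) : aff_indep (q8 (0 : R)).
Proof.
move=> c h0 hc.
rewrite sum8 in h0.
have E0000 := hc false false false false; rewrite sum8 /q8 /ptL /pt /mkpt /vtx /= in E0000.
have E0001 := hc false false false true; rewrite sum8 /q8 /ptL /pt /mkpt /vtx /= in E0001.
have E0010 := hc false false true false; rewrite sum8 /q8 /ptL /pt /mkpt /vtx /= in E0010.
have E0011 := hc false false true true; rewrite sum8 /q8 /ptL /pt /mkpt /vtx /= in E0011.
have E0100 := hc false true false false; rewrite sum8 /q8 /ptL /pt /mkpt /vtx /= in E0100.
have E0101 := hc false true false true; rewrite sum8 /q8 /ptL /pt /mkpt /vtx /= in E0101.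
have E0110 := hc false true true false; rewrite sum8 /q8 /ptL /pt /mkpt /vtx /= in E0110.
have E0111 := hc false true true true; rewrite sum8 /q8 /ptL /pt /mkpt /vtx /= in E0111.
have E1000 := hc true false false false; rewrite sum8 /q8 /ptL /pt /mkpt /vtx /= in E1000.
have E1001 := hc true false false true; rewrite sum8 /q8 /ptL /pt /mkpt /vtx /= in E1001.
have E1010 := hc true false true false; rewrite sum8 /q8 /ptL /pt /mkpt /vtx /= in E1010.
have E1011 := hc true false true true; rewrite sum8 /q8 /ptL /pt /mkpt /vtx /= in E1011.
have E1100 := hc true true false false; rewrite sum8 /q8 /ptL /pt /mkpt /vtx /= in E1100.
have E1101 := hc true true false true; rewrite sum8 /q8 /ptL /pt /mkpt /vtx /= in E1101.
have E1110 := hc true true true false; rewrite sum8 /q8 /ptL /pt /mkpt /vtx /= in E1110.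
have E1111 := hc true true true true; rewrite sum8 /q8 /ptL /pt /mkpt /vtx /= in E1111.
have [z0 [z1 [z2 [z3 [z4 [z5 [z6 [z7 z8]]]]]]]] := @aux9 R 0 (c (@Ordinal 8 0 isT)) (c (@Ordinal 8 1 isT)) (c (@Ordinal 8 2 isT)) (c (@Ordinal 8 3 isT)) (c (@Ordinal 8 4 isT)) (c (@Ordinal 8 5 isT)) (c (@Ordinal 8 6 isT)) (c (@Ordinal 8 7 isT)) 0  ltac:(rewrite -[RHS]h0; ring) ltac:(rewrite -[RHS]E0000; ring) ltac:(rewrite -[RHS]E0001; ring) ltac:(rewrite -[RHS]E0010; ring) ltac:(rewrite -[RHS]E0011; ring) ltac:(rewrite -[RHS]E0100; ring) ltac:(rewrite -[RHS]E0101; ring) ltac:(rewrite -[RHS]E0110; ring) ltac:(rewrite -[RHS]E0111; ring) ltac:(rewrite -[RHS]E1000; ring) ltac:(rewrite -[RHS]E1001; ring) ltac:(rewrite -[RHS]E1010; ring) ltac:(rewrite -[RHS]E1011; ring) ltac:(rewrite -[RHS]E1100; ring) ltac:(rewrite -[RHS]E1101; ring) ltac:(rewrite -[RHS]E1110; ring) ltac:(rewrite -[RHS]E1111; ring).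
move=> [k hk].
do 8 (case: k hk => [|k] hk; [by rewrite (bool_irrelevance hk isT) | ]).
by [].
Qed.

Lemma face12 (R : realType) (e : R) (i : 'I_12) : ineq_lhs e (q12 e i) = e * (1 - e).
Proof.
case: i => k hk.
do 12 (case: k hk => [|k] hk; [by rewrite /q12 /ptL /pt /mkpt /vtx /ineq_lhs /=; ring|]).
by [].
Qed.

Lemma face8 (R : realType) (i : 'I_8) : ineq_lhs 0 (q8 (0 : R) i) = 0 * (1 - 0).
Proof.
case: i => k hk.
do 8 (case: k hk => [|k] hk; [by rewrite /q8 /ptL /pt /mkpt /vtx /ineq_lhs /=; ring|]).
by [].
Qed.

Lemma affP (R : realType) (e : R) : 0 < e -> e < 1 -> affdim (in_P e) 12.
Proof.
move=> e0 e1; split.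
  exists (q13 e); split; last exact: indep13.
  by move=> i; apply: in_P_ptL => //; exact: ltW.
move=> q hq; exact: (no_indep (@recP R e) hq).
Qed.

Lemma affF (R : realType) (e : R) : 0 < e -> e < 1 ->
  affdim (fun p => in_P e p /\ ineq_lhs e p = e * (1 - e)) 11.
Proof.
move=> e0 e1; split.
  exists (q12 e); split; last exact: indep12.
  move=> i; split; last exact: face12.
  by apply: in_P_ptL => //; exact: ltW.
move=> q hq; apply: (@no_indep R 11 (fun p => in_P e p /\ ineq_lhs e p = e * (1 - e)) (selL L11) _ q hq).
move=> q0 hq0; exact: (recF e1 hq0).
Qed.

Lemma affP0 (R : realType) : affdim (@in_P R 0) 8.
Proof.
split.
  exists (q9 0); split; last exact: indep9.
  by move=> i; apply: in_P_ptL.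
move=> q hq; exact: (no_indep (@rec0 R) hq).
Qed.

Lemma affF0 (R : realType) :
  affdim (fun p => @in_P R 0 p /\ ineq_lhs 0 p = 0 * (1 - 0)) 7.
Proof.
split.
  exists (q8 0); split; last exact: indep8.
  move=> i; split; last exact: face8.
  by apply: in_P_ptL.
move=> q hq; apply: (@no_indep R 7 (fun p => @in_P R 0 p /\ ineq_lhs 0 p = 0 * (1 - 0)) (selL L7) _ q hq).
move=> q0 hq0; exact: (recF0 hq0).
Qed.

Unset Implicit Arguments.

Theorem mainTheorem6 (R : realType) (eps : R) (heps0 : 0 <= eps) (heps1 : eps < 1) :
  (forall p : behav R, in_P eps p -> ineq_lhs eps p <= eps * (1 - eps)) /\
  (exists k : nat,
      affdim (in_P eps) k.+1 /\
      affdim (fun p => in_P eps p /\ ineq_lhs eps p = eps * (1 - eps)) k) /\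
  (0 < eps -> affdim (in_P eps) 12).
Proof.
split; first by move=> p hp; exact: valid.
split; last by move=> e0; exact: affP.
case: (eqVneq eps 0) => [E|ne].
  subst eps; exists 7%N; split; [exact: affP0 | exact: affF0].
have e0 : 0 < eps by rewrite lt_neqAle eq_sym ne.
exists 11%N; split; [exact: affP | exact: affF].
Qed.
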